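(* For every integer $\omega$, there is a proof labeling scheme of size $O(\log n)$ for the class $\mathcal{G}_\omega$ of all graphs $G$ such that each connected component of $G$ admits an elimination tree of width at most $\omega$ which is a spanning tree of (i.e., a subgraph of) that component.
   Context: An elimination tree of a connected graph $G$ is a rooted tree $F$ with $V(F)=V(G)$ such that for every edge $uv$ of $G$, one of $u,v$ is an ancestor of the other in $F$. For $v\in V(F)$ let $F_v$ be the subtree rooted at $v$ and let $\mathsf{str}(v)$ consist of $v$ together with all strict ancestors of $v$ that have a neighbour (in $G$) in $V(F_v)$. The width of $F$ is $\max_v|\mathsf{str}(v)|-1$. Each vertex has a unique identifier in $\{1,\dots,n\}$. A proof labeling scheme for a class $\Pi$: a prover assigns binary labels to vertices; a verifier at $v$ sees only $\mathsf{id}(v)$ and $(\mathsf{id}(w),\varphi(w))$ for $w\in N[v]$ and outputs Yes/No; completeness: on graphs in $\Pi$ the prover's labels make all vertices output Yes; soundness: on graphs not in $\Pi$, for every labeling some vertex outputs No. Size $O(\log n)$: all labels have length $O(\log n)$. *)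

(* Defs.v *)
From mathcomp Require Import all_boot all_order all_algebra.
Set Implicit Arguments. Unset Strict Implicit. Unset Printing Implicit Defensive.
Import GRing.Theory Num.Theory.

Definition simple_graph (n : nat) (e : rel 'I_n) : Prop :=
  (forall u v, e u v = e v u) /\ (forall v, ~~ e v v).

Definition component n (e : rel 'I_n) (v : 'I_n) : {set 'I_n} :=
  [set u | connect e v u].

Definition rooted_tree_on n (C : {set 'I_n}) (r : 'I_n) (p : 'I_n -> 'I_n) : Prop :=
  [/\ r \in C, p r = r,
      forall v, v \in C -> p v \in C
    & forall v, v \in C -> exists k, iter k p v = r].

(* u is an ancestor of v (non-strict: includes u = v): u is reached
   from v by following parent pointers (at most n steps suffice on n
   vertices; this makes the predicate boolean). *)
Definition ancestor n (p : 'I_n -> 'I_n) (u v : 'I_n) : bool :=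
  [exists k : 'I_n.+1, iter k p v == u].

Definition elimination_tree n (e : rel 'I_n) (C : {set 'I_n}) r p : Prop :=
  rooted_tree_on C r p /\
  forall u v, u \in C -> e u v -> ancestor p u v \/ ancestor p v u.

Definition tree_is_subgraph n (e : rel 'I_n) (C : {set 'I_n}) r p : Prop :=
  forall v, v \in C -> v != r -> e v (p v).

Definition subtree n (C : {set 'I_n}) (p : 'I_n -> 'I_n) (v : 'I_n) : {set 'I_n} :=
  [set u in C | ancestor p v u ].

Definition str n (e : rel 'I_n) (C : {set 'I_n}) (p : 'I_n -> 'I_n) (v : 'I_n)
  : {set 'I_n} :=
  v |: [set a | [&& a != v, ancestor p a v
                 & [exists w in subtree C p v, e a w]]].

Definition width_le n (e : rel 'I_n) (C : {set 'I_n}) p (w : int) : Prop :=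
  forall v, v \in C -> ((#|str e C p v|)%:Z - 1 <= w)%R.

Definition in_G_omega (w : int) n (e : rel 'I_n) : Prop :=
  forall v : 'I_n, exists (r : 'I_n) (p : 'I_n -> 'I_n),
    let C := component e v in
    [/\ elimination_tree e C r p, tree_is_subgraph e C r p & width_le e C p w].

Definition valid_ids n (id : 'I_n -> nat) : Prop :=
  injective id /\ forall v, 1 <= id v <= n.

(* Local view of v: the pairs (id w, label w) for w in N[v], listed in
   increasing order of identifier (a canonical encoding of the set). *)
Definition view n (e : rel 'I_n) (id : 'I_n -> nat) (lab : 'I_n -> bitseq)
  (v : 'I_n) : seq (nat * bitseq) :=
  sort (fun a b => a.1 <= b.1)
       [seq (id w, lab w) | w <- enum 'I_n & (w == v) || e v w].

Definition verifier := nat -> seq (nat * bitseq) -> bool.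

Definition has_log_PLS (P : forall n, rel 'I_n -> Prop) : Prop :=
  exists (ver : verifier) (c : nat),
  forall n (e : rel 'I_n) (id : 'I_n -> nat),
    simple_graph e -> valid_ids id ->
    (P n e ->
       exists lab : 'I_n -> bitseq,
         (forall v, size (lab v) <= c * (trunc_log 2 n).+1) /\
         (forall v, ver (id v) (view e id lab v))) /\
    (~ P n e -> forall lab : 'I_n -> bitseq, exists v, ver (id v) (view e id lab v) = false).

(* Main.v *)
Require Import Defs.
From mathcomp Require Import all_boot all_order all_algebra zify.
From Stdlib Require Import ClassicalEpsilon.
Set Implicit Arguments. Unset Strict Implicit. Unset Printing Implicit Defensive.

Fixpoint bin (f k : nat) : bitseq :=
  match f with 0 => [::] | f'.+1 => if k == 0 then [::] else odd k :: bin f' k./2 end.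
Definition bval (s : bitseq) : nat := foldr (fun (b : bool) (acc : nat) => (b : nat) + acc.*2) 0 s.
Definition enc_item (x : bitseq) : bitseq :=
  flatten (map (fun b => [:: true; b]) x) ++ [:: false].
Fixpoint dec (s : bitseq) : seq bitseq :=
  match s with
  | [::] => [::]
  | false :: s' => [::] :: dec s'
  | true :: b :: s' => match dec s' with [::] => [:: [:: b]] | x :: r => (b :: x) :: r end
  | [:: true] => [::]
  end.
Definition enc (s : seq nat) : bitseq := flatten (map (fun k => enc_item (bin k k)) s).
Definition dlab (l : bitseq) : seq nat := map bval (dec l).

Lemma bvalK f k : k <= f -> bval (bin f k) = k.
Proof.
elim: f k => [|f IH] k /=; first by rewrite leqn0 => /eqP->.
case: eqP => [->//|/eqP k0 kf] /=.
rewrite IH; first by rewrite odd_double_half.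
rewrite -divn2; lia.
Qed.

Lemma dec_item x s : dec (enc_item x ++ s) = x :: dec s.
Proof.
elim: x => [|b x IH] //=. by rewrite /enc_item /= in IH *; rewrite IH.
Qed.

Lemma dlab_enc s : dlab (enc s) = s.
Proof.
rewrite /dlab; elim: s => [|k s IH] //=.
by rewrite /enc /= dec_item /= bvalK // -/(enc s) IH.
Qed.

Lemma size_bin f k m : k < 2 ^ m -> size (bin f k) <= m.
Proof.
elim: f k m => [|f IH] k m //=.
case: eqP => // /eqP k0; case: m => [|m]; first by rewrite expn0; lia.
rewrite expnS => h /=; rewrite ltnS; apply: IH.
rewrite -divn2; move: h; set X := 2 ^ m; lia.
Qed.

Lemma size_enc_item x : size (enc_item x) = (size x).*2.+1.
Proof.
rewrite /enc_item size_cat /= addn1; congr _.+1.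
elim: x => //= b x ->; by rewrite doubleS.
Qed.

Lemma size_enc s n : all (fun k => k <= n) s ->
  size (enc s) <= size s * (3 * (trunc_log 2 n).+1).
Proof.
have h := @trunc_log_ltn 2 n erefl.
elim: s => //= k s IH /andP[kn /IH {}IH].
rewrite /enc /= size_cat -/(enc s) mulSn leq_add //.
rewrite size_enc_item.
have : size (bin k k) <= (trunc_log 2 n).+1.
  apply: size_bin; exact: leq_ltn_trans kn h.
rewrite -addnn; lia.
Qed.

Lemma ancestorP n (p : 'I_n -> 'I_n) a v :
  reflect (exists k, iter k p v = a) (ancestor p a v).
Proof.
apply: (iffP existsP) => [[k /eqP <-]|[k hk]]; first by exists k.
have hc : fconnect p v a by rewrite -hk fconnect_iter.
have hl : findex p v a < n.+1.
  apply: (leq_trans (findex_max hc)); apply: ltnW; apply: leq_ltn_trans (ltnSn _).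
  by rewrite /order; apply: leq_trans (max_card _) _; rewrite card_ord.
by exists (Ordinal hl); rewrite /= iter_findex.
Qed.

Definition labof (V : seq (nat * bitseq)) (j : nat) : bitseq :=
  (nth (0, [::]) V (find (fun x => x.1 == j) V)).2.

Lemma mem_view n (e : rel 'I_n) id lab v a b :
  ((a, b) \in view e id lab v) = [exists x, [&& (x == v) || e v x, a == id x & b == lab x]].
Proof.
rewrite /view mem_sort; apply/mapP/existsP => [[x]|[x /and3P[h /eqP-> /eqP->]]].
  rewrite mem_filter mem_enum andbT => h [-> ->]; exists x; by rewrite h !eqxx.
by exists x; rewrite // mem_filter mem_enum h.
Qed.

Lemma labof_view n (e : rel 'I_n) id lab v :
  injective id -> labof (view e id lab v) (id v) = lab v.
Proof.
move=> inj; rewrite /labof; set V := view _ _ _ _.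
have hv : (id v, lab v) \in V by rewrite mem_view; apply/existsP; exists v; rewrite !eqxx.
have hh : has (fun x => x.1 == id v) V by apply/hasP; exists (id v, lab v).
have := nth_find (0, [::]) hh; rewrite has_find in hh; have := mem_nth (0, [::]) hh.
case: (nth _ _ _) => a b /=; rewrite mem_view => /existsP[x /and3P[_ /eqP-> /eqP->]].
by move=> /eqP /inj ->.
Qed.

Definition vroot (l : bitseq) := nth 0 (dlab l) 0.
Definition vpar (l : bitseq) := nth 0 (dlab l) 1.
Definition vdep (l : bitseq) := nth 0 (dlab l) 2.
Definition vS (l : bitseq) := drop 3 (dlab l).

Definition ver (w : int) : verifier := fun i V =>
  let l := labof V i in
  [&& all (fun x => vroot x.2 == vroot l) V,
      ((size (vS l))%:Z - 1 <= w)%R,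
      i \in vS l,
      all (fun x => (x.1 != i) ==> (vdep x.2 <= vdep l) ==> (x.1 \in vS l)) V &
      if vdep l == 0 then [&& i == vroot l, vpar l == i & all (fun s => s == i) (vS l)]
      else has (fun x => [&& x.1 == vpar l, vdep x.2 == (vdep l).-1 &
                 all (fun s => (s == i) || (s \in vS x.2)) (vS l)]) V].

Section Sound.
Variables (w : int) (n : nat) (e : rel 'I_n) (id : 'I_n -> nat) (lab : 'I_n -> bitseq).
Hypothesis sg : simple_graph e.
Hypothesis vi : valid_ids id.
Hypothesis acc : forall v, ver w (id v) (view e id lab v).

Let inj : injective id := vi.1.
Let R v := vroot (lab v).
Let P v := vpar (lab v).
Let D v := vdep (lab v).
Let S v := vS (lab v).

Lemma in_view v x : (x == v) || e v x -> (id x, lab x) \in view e id lab v.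
Proof. by move=> h; rewrite mem_view; apply/existsP; exists x; rewrite h !eqxx. Qed.

Lemma in_view_inv v a b : (a, b) \in view e id lab v ->
  exists x, [/\ (x == v) || e v x, a = id x & b = lab x].
Proof. by rewrite mem_view => /existsP[x /and3P[h /eqP-> /eqP->]]; exists x. Qed.

Lemma accE v : let l := lab v in let V := view e id lab v in
  [&& all (fun x => vroot x.2 == vroot l) V,
      ((size (vS l))%:Z - 1 <= w)%R,
      id v \in vS l,
      all (fun x => (x.1 != id v) ==> (vdep x.2 <= vdep l) ==> (x.1 \in vS l)) V &
      if vdep l == 0 then [&& id v == vroot l, vpar l == id v & all (fun s => s == id v) (vS l)]
      else has (fun x => [&& x.1 == vpar l, vdep x.2 == (vdep l).-1 &
                 all (fun s => (s == id v) || (s \in vS x.2)) (vS l)]) V].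
Proof. by have := acc v; rewrite /ver labof_view. Qed.

Lemma acc_root v x : (x == v) || e v x -> R x = R v.
Proof.
by move=> h; case/and5P: (accE v) => /allP/(_ _ (in_view h))/eqP.
Qed.

Lemma acc_w v : ((size (S v))%:Z - 1 <= w)%R.
Proof. by case/and5P: (accE v). Qed.

Lemma acc_self v : id v \in S v.
Proof. by case/and5P: (accE v). Qed.

Lemma acc_nb v x : e v x -> D x <= D v -> id x \in S v.
Proof.
move=> h hd; have hx : (x == v) || e v x by rewrite h orbT.
case/and5P: (accE v) => _ _ _ /allP/(_ _ (in_view hx)) /= + _.
have -> : id x != id v.
  apply/eqP => /inj exv; move: h; rewrite exv; by rewrite (negbTE (sg.2 v)).
by rewrite hd.
Qed.

Lemma acc_0 v : D v = 0 -> [/\ id v = R v, P v = id v & forall s, s \in S v -> s = id v].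
Proof.
move=> h; case/and5P: (accE v) => _ _ _ _; rewrite -/(D v) h eqxx.
case/and3P => /eqP h1 /eqP h2 /allP h3; split => // s /h3 /eqP //.
Qed.

Lemma acc_pos v : D v != 0 -> exists x, [/\ (x == v) || e v x, id x = P v, D x = (D v).-1
   & forall s, s \in S v -> s = id v \/ s \in S x].
Proof.
move=> h; case/and5P: (accE v) => _ _ _ _; rewrite -/(D v) (negbTE h).
case/hasP => [[a b]] /in_view_inv [x [hx -> ->]] /= /and3P[/eqP h1 /eqP h2 /allP h3].
exists x; split => // s /h3 /orP[/eqP|]; by [left|right].
Qed.

Definition pp (u : 'I_n) : 'I_n :=
  odflt u [pick x | ((x == u) || e u x) && (id x == P u)].

Lemma p0 v : D v = 0 -> pp v = v.
Proof.
move=> /acc_0 [_ hP _]; rewrite /pp; case: pickP => //= x /andP[_ /eqP].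
by rewrite hP => /inj.
Qed.

Lemma ppos v : D v != 0 -> [/\ e v (pp v), D (pp v) = (D v).-1
   & forall s, s \in S v -> s = id v \/ s \in S (pp v)].
Proof.
move=> h; have [x [hx hid hD hS]] := acc_pos h.
have -> : pp v = x.
  rewrite /pp; case: pickP => [y /andP[_ /eqP]|/(_ x)]; last by rewrite hx hid eqxx.
  by rewrite -hid => /inj.
split => //; case/orP: hx => // /eqP xv; move: hD; rewrite xv; lia.
Qed.

Lemma iter_dec k u a : iter k pp u = a -> a = u \/ D a < D u.
Proof.
elim: k u => [|k IH] u; first by left.
rewrite iterSr.
case: (eqVneq (D u) 0) => [h|h].
  by rewrite p0 //; apply: IH.
have [_ hD _] := ppos h.
move/IH => [->|]; right; rewrite ?hD; lia.
Qed.

Lemma S_anc : forall v s, s \in S v -> exists a, id a = s /\ exists k, iter k pp v = a.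
Proof.
move=> v; move: {2}(D v) (leqnn (D v)) => d; elim: d v => [|d IH] v hd s hs.
  have hv : D v = 0 by lia.
  have [_ _ h] := acc_0 hv; rewrite (h _ hs); exists v; split => //; by exists 0.
case: (eqVneq (D v) 0) => [hv|hv].
  have [_ _ h] := acc_0 hv; rewrite (h _ hs); exists v; split => //; by exists 0.
have [_ hD hS] := ppos hv.
case: (hS _ hs) => [->|hs']; first by exists v; split => //; exists 0.
have [|a [ha [k hk]]] := IH (pp v) _ s hs'; first by rewrite hD; lia.
exists a; split => //; exists k.+1; by rewrite iterSr.
Qed.

Lemma conn_root u v : connect e u v -> R v = R u.
Proof.
move/connectP => [s]; elim: s u => [|x s IH] u /=; first by move=> _ ->.
move=> /andP[hux hp] hl; rewrite (IH x hp hl); apply: acc_root; by rewrite hux orbT.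
Qed.

Lemma conn_pp u : connect e u (pp u).
Proof.
case: (eqVneq (D u) 0) => [h|h]; first by rewrite p0.
by have [h1 _ _] := ppos h; apply: connect1.
Qed.

Lemma conn_iter k u : connect e u (iter k pp u).
Proof.
elim: k => //= k IH; apply: connect_trans IH (conn_pp _).
Qed.

Lemma iter_D k u : D (iter k pp u) = D u - k.
Proof.
elim: k u => [|k IH] u; first by rewrite subn0.
rewrite iterSr IH.
case: (eqVneq (D u) 0) => [h|h]; first by rewrite p0 // h.
have [_ -> _] := ppos h; lia.
Qed.

Lemma up k y a : iter k pp y = a -> True.
Proof. by []. Qed.

Lemma upS (v : 'I_n) : forall k y a, iter k pp y = v -> id a \in S y -> D a < D v -> id a \in S v.
Proof.
move=> k; elim: k => [|k IH] y a; first by move=> <-.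
rewrite iterSr => hk ha hav; apply: (IH (pp y)) => //.
case: (eqVneq (D y) 0) => [h|h]; first by rewrite p0.
have [_ _ hS] := ppos h.
case: (hS _ ha) => // /inj ay.
have := iter_dec (etrans (iterSr k pp y) hk); rewrite -ay; case => [va|]; [rewrite va in hav|]; lia.
Qed.

Lemma sound : in_G_omega w e.
Proof.
move=> v0; set r := iter (D v0) pp v0; exists r, pp => C.
have inC u : (u \in C) = connect e v0 u by rewrite /C /component inE.
have Dr : D r = 0 by rewrite /r iter_D subnn.
have rC : r \in C by rewrite inC conn_iter.
have ppC u : u \in C -> pp u \in C.
  by rewrite !inC => h; apply: connect_trans h (conn_pp _).
have toR u : u \in C -> iter (D u) pp u = r.
  move=> hu; set r' := iter _ _ _.
  have Dr' : D r' = 0 by rewrite /r' iter_D subnn.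
  have [h1 _ _] := acc_0 Dr'; have [h2 _ _] := acc_0 Dr.
  apply: inj; rewrite h1 h2.
  rewrite inC in hu; rewrite (conn_root (conn_iter (D u) u)) (conn_root hu).
  by rewrite (conn_root (conn_iter _ v0)).
have anc u a : (exists k, iter k pp u = a) -> ancestor pp a u by move/ancestorP.
split.
- split; first split => //; first by rewrite p0.
    by move=> u hu; exists (D u); apply: toR.
  move=> u v hu huv.
  have [hvu|huv'] := leqP (D v) (D u).
    right; have [a [ha hk]] := S_anc (acc_nb huv hvu); move: (inj ha) => ?; subst a; exact: anc.
  left; have hvu : e v u by rewrite sg.1.
  have [a [ha hk]] := S_anc (acc_nb hvu (ltnW huv')); move: (inj ha) => ?; subst a; exact: anc.
- move=> v hv hvr; case: (eqVneq (D v) 0) => [h|h].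
    by move: (toR v hv); rewrite h /= => hh; rewrite hh eqxx in hvr.
  by have [] := ppos h.
- move=> v hv.
  set A := str e C pp v.
  have sub : {subset map id (enum A) <= S v}.
    move=> z /mapP[x hx ->]; rewrite mem_enum in hx.
    move: hx; rewrite /A /str !inE => /orP[/eqP->|]; first exact: acc_self.
    case/and3P => hxv /ancestorP[k hk] /existsP[y /andP[hy hxy]].
    move: hy; rewrite /subtree inE => /andP[_ /ancestorP[j hj]].
    have Dxv : D x < D v by case: (iter_dec hk) => // hh; rewrite hh eqxx in hxv.
    have Dvy : D v <= D y by case: (iter_dec hj) => [->//|]; apply: ltnW.
    apply: (upS hj) => //; apply: acc_nb; first by rewrite sg.1.
    lia.
  have hsz : #|A| <= size (S v).
    rewrite cardE -(size_map id); apply: uniq_leq_size => //.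
    by rewrite map_inj_uniq ?enum_uniq.
  have := acc_w v; lia.
Qed.
End Sound.

Section Tree.
Variables (w : int) (n : nat) (e : rel 'I_n) (id : 'I_n -> nat).
Hypothesis sg : simple_graph e.
Hypothesis vi : valid_ids id.
Variables (C : {set 'I_n}) (r : 'I_n) (p : 'I_n -> 'I_n).
Hypothesis ET : elimination_tree e C r p.
Hypothesis TS : tree_is_subgraph e C r p.
Hypothesis WL : width_le e C p w.
Hypothesis Ccl : forall u x, u \in C -> e u x -> x \in C.

Let inj : injective id := vi.1.
Definition dd u := findex p u r.

Lemma rC : r \in C. Proof. by case: ET => [[]]. Qed.
Lemma pr : p r = r. Proof. by case: ET => [[]]. Qed.
Lemma pC u : u \in C -> p u \in C. Proof. by case: ET => [[_ _ h _]] _; apply: h. Qed.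

Lemma dd_a u : u \in C -> iter (dd u) p u = r.
Proof.
case: ET => [[_ _ _ h]] _ /h [k hk]; apply: iter_findex; by rewrite -hk fconnect_iter.
Qed.

Lemma dd_b u k : iter k p u = r -> dd u <= k.
Proof.
move=> hk; have hc : fconnect p u r by rewrite -hk fconnect_iter.
case: (ltnP k (order p u)) => h.
  by rewrite /dd -hk findex_iter.
by apply: ltnW; apply: leq_trans (findex_max hc) h.
Qed.

Lemma dd_lt u : u \in C -> dd u < n.
Proof.
move=> hu; have hc : fconnect p u r by rewrite -(dd_a hu) fconnect_iter.
apply: leq_trans (findex_max hc) _.
by rewrite /order; apply: leq_trans (max_card _) _; rewrite card_ord.
Qed.

Lemma dd_r : dd r = 0. Proof. exact: findex0. Qed.

Lemma iter_r k : iter k p r = r. Proof. exact: iter_fix pr. Qed.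

Lemma dd_F2 u : u \in C -> u != r -> dd (p u) = (dd u).-1.
Proof.
move=> hu hur; have ha := dd_a hu.
have d0 : dd u != 0 by apply: contra hur => /eqP h; rewrite -ha h.
apply/eqP; rewrite eqn_leq; apply/andP; split.
  apply: dd_b; rewrite -iterSr prednK ?lt0n //.
have := dd_b (u := u) (k := (dd (p u)).+1); rewrite iterSr dd_a ?pC // => /(_ erefl); lia.
Qed.

Lemma dd_F3 u j v : u \in C -> iter j p u = v -> v != u -> dd v < dd u.
Proof.
move=> hu hj hvu; have ha := dd_a hu.
case: (leqP (dd u) j) => h.
  have vr : v = r by rewrite -hj -(subnK h) iterD ha iter_r.
  rewrite vr dd_r lt0n; apply/eqP => h0; move: ha; rewrite h0 /= => ur.
  by rewrite vr ur eqxx in hvu.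
have : iter (dd u - j) p v = r.
  by rewrite -hj -(iterD (dd u - j) j) (subnK (ltnW h)).
move/dd_b; case: j hj h => [/= hj0 |j] _ h; first by rewrite hj0 eqxx in hvu.
lia.
Qed.

Definition labT (u : 'I_n) : bitseq :=
  enc ([:: id r; id (p u); dd u] ++ map id (enum (str e C p u))).

Lemma dlab_labT u : dlab (labT u) = [:: id r; id (p u); dd u] ++ map id (enum (str e C p u)).
Proof. exact: dlab_enc. Qed.

Lemma str_self u : u \in str e C p u.
Proof. by rewrite /str setU11. Qed.

Lemma anc_refl v : ancestor p v v.
Proof. by apply/ancestorP; exists 0. Qed.

Lemma str_r x : x \in str e C p r -> x = r.
Proof.
rewrite /str !inE => /orP[/eqP //|/and3P[_ /ancestorP[k hk] _]].
by rewrite -hk iter_r.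
Qed.

Lemma str_up v a : v \in C -> v != r -> a \in str e C p v -> a != v -> a \in str e C p (p v).
Proof.
move=> hv hvr; rewrite /str !inE => /orP[/eqP -> |]; first by rewrite eqxx.
case/and3P => _ /ancestorP[k hk] /existsP[y /andP[hy hay]] hav.
case: (eqVneq a (p v)) => [-> //|hapv] /=.
apply/andP; split.
  case: k hk => [/= hk|k hk]; first by rewrite hk eqxx in hav.
  by apply/ancestorP; exists k; rewrite -iterSr.
apply/existsP; exists y; rewrite hay andbT.
move: hy; rewrite /subtree !inE => /andP[-> /ancestorP[j hj]] /=.
by apply/ancestorP; exists j.+1; rewrite iterS hj.
Qed.

Lemma acceptT (lab : 'I_n -> bitseq) v : v \in C ->
  (forall x, (x == v) || e v x -> lab x = labT x) ->
  ver w (id v) (view e id lab v).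
Proof.
move=> hv hl.
have nC x : (x == v) || e v x -> x \in C.
  by case/orP => [/eqP -> //|hx]; apply: Ccl hx.
rewrite /ver labof_view //.
have hlv : lab v = labT v by apply: hl; rewrite eqxx.
rewrite hlv /vroot /vpar /vdep /vS dlab_labT /= drop0.
apply/and5P; split.
- apply/allP => -[a b] /in_view_inv [x [hx -> ->]] /=.
  by rewrite hl // dlab_labT.
- rewrite size_map -cardE; exact: WL.
- by apply: map_f; rewrite mem_enum str_self.
- apply/allP => -[a b] /in_view_inv [x [hx -> ->]] /=.
  rewrite hl // dlab_labT /=; apply/implyP => hidx; apply/implyP => hdx.
  have hxv : x != v by apply: contra hidx => /eqP ->.
  have exv : e v x by move: hx; rewrite (negbTE hxv).
  apply: map_f; rewrite mem_enum /str !inE hxv /=.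
  case: ET => _ /(_ v x hv exv) [/ancestorP[j hj]|hanc].
    have := dd_F3 (nC _ hx) hj; rewrite eq_sym hxv => /(_ erefl); lia.
  rewrite hanc /=; apply/orP; right; apply/existsP; exists v.
  by rewrite /subtree !inE hv anc_refl /= sg.1.
- case: ifP => [/eqP d0|/negbT d0].
  + have vr : v = r by rewrite -(dd_a hv) d0.
    subst v; rewrite pr !eqxx /=; apply/allP => s /mapP[x]; rewrite mem_enum.
    by move=> /str_r -> ->.
  + have hvr : v != r by apply: contra d0 => /eqP ->; rewrite dd_r.
    have hpv : (p v == v) || e v (p v) by rewrite TS ?orbT.
    apply/hasP; exists (id (p v), lab (p v)); first exact: in_view.
    rewrite /= hl // dlab_labT /= eqxx dd_F2 // eqxx /=.
    apply/allP => s /mapP[a]; rewrite mem_enum => ha ->.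
    case: (eqVneq a v) => [->|hav]; first by rewrite eqxx.
    by rewrite drop0 map_f ?orbT // mem_enum str_up.
Qed.

Lemma sizeT u : u \in C ->
  size (labT u) <= 3 * (absz w + 4) * (trunc_log 2 n).+1.
Proof.
move=> hu.
have hle : all (fun k => k <= n) ([:: id r; id (p u); dd u] ++ map id (enum (str e C p u))).
  have hid x : id x <= n by case/andP: (proj2 vi x).
  rewrite /= !hid /= (ltnW (dd_lt hu)) /=.
  by apply/allP => _ /mapP[x _ ->].
apply: leq_trans (size_enc hle) _.
rewrite size_cat size_map -cardE /=.
have := WL hu; set m := #|_|; move=> h.
have : m <= absz w + 1 by lia.
set t := (trunc_log 2 n).+1; nia.
Qed.
End Tree.

Theorem proposition5 (w : int) : has_log_PLS (in_G_omega w).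
Proof.
exists (ver w), (3 * (absz w + 4)) => n e id sg vi; split.
- move=> hP.
  have hc : forall v, {rp : 'I_n * ('I_n -> 'I_n) | let C := component e v in
     [/\ elimination_tree e C rp.1 rp.2, tree_is_subgraph e C rp.1 rp.2 & width_le e C rp.2 w]}.
    move=> v; apply: constructive_indefinite_description.
    by have [r [p h]] := hP v; exists (r, p).
  have csym : connect_sym e by apply: sym_connect_sym => x y; rewrite sg.1.
  pose T u := sval (hc (fingraph.root e u)).
  pose lab u := labT e id (component e (fingraph.root e u)) (T u).1 (T u).2 u.
  have inC v : v \in component e (fingraph.root e v) by rewrite inE csym connect_root.
  have Ccl v : forall u x, u \in component e v -> e u x -> x \in component e v.
    by move=> u x; rewrite !inE => h1 h2; apply: connect_trans h1 (connect1 h2).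
  exists lab; split.
  + move=> v; have [h1 h2 h3] := svalP (hc (fingraph.root e v)).
    exact: (sizeT vi h1 h3 (inC v)).
  + move=> v; have [h1 h2 h3] := svalP (hc (fingraph.root e v)).
    apply: (acceptT sg vi h1 h2 h3 (Ccl _) (inC v)).
    move=> x hx.
    have E : fingraph.root e x = fingraph.root e v.
      symmetry; apply/(fingraph.rootP csym); case/orP: hx => [/eqP -> //|hx]; exact: connect1.
    by rewrite /lab /T E.
- move=> hn lab.
  case: (boolP [forall v, ver w (id v) (view e id lab v)]) => [/forallP h|].
    by case: hn; apply: (sound sg vi h).
  by rewrite negb_forall => /existsP[v /negbTE hv]; exists v.
Qed.
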